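(* For every $\lambda\in\Lambda^{\bullet}(n,r)$, the map $\mathrm{ro}:\mathrm{cb}(\lambda)\to\Lambda(n,r)_{\preceq\lambda}$, $A\mapsto\mathrm{ro}(A)$, is a bijection.
   Context: Let $n,r\ge 0$. $\Lambda(n,r)$ is the set of weak compositions $(\lambda_1,\dots,\lambda_n)$ of $r$ into $n$ nonnegative parts. $\Lambda^{\bullet}(n,r)$ is the set of $\lambda\in\Lambda(n,r)$ such that $\lambda_i=0$ implies $\lambda_j=0$ for all $j>i$. For an $n\times n$ matrix $A$, $\mathrm{ro}(A)$ and $\mathrm{co}(A)$ denote its row-sum and column-sum vectors. A column block diagonal matrix is a matrix $A=(a_{i,j})$ with nonnegative integer entries such that $a_{i,j}>0$ implies $a_{i',s}=0$ for all $i'\le i$ and $s>j$. $\mathrm{cb}(\lambda)$ is the set of $n\times n$ column block diagonal matrices $A$ with $\mathrm{co}(A)=\lambda$. For $\mu,\lambda\in\Lambda(n,r)$, $\mu$ is a refinement of $\lambda$, written $\mu\preceq\lambda$, if $\mu$ is obtained by subdividing the parts of $\lambda$ in order. Precisely, if $\lambda=(\lambda_1,\dots,\lambda_t,0,\dots,0)$ with $\lambda_1,\dots,\lambda_t>0$, then there are indices $1=i_1<i_2<\dots<i_{t+1}=n+1$ with $\lambda_k=\mu_{i_k}+\dots+\mu_{i_{k+1}-1}$ for $1\le k\le t$. $\Lambda(n,r)_{\preceq\lambda}=\{\mu\in\Lambda(n,r):\mu\preceq\lambda\}$. *)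

(* Defs.v *)
From mathcomp Require Import all_boot all_algebra.
Set Implicit Arguments. Unset Strict Implicit. Unset Printing Implicit Defensive.

(* Indices are 0-based: 'I_n = {0,...,n-1}. Weak compositions are functions
   'I_n -> nat; n x n matrices have entries in nat. *)

Definition wcomp (n r : nat) (lam : 'I_n -> nat) : Prop :=
  \sum_(i < n) lam i = r.

Definition wcomp_bullet (n r : nat) (lam : 'I_n -> nat) : Prop :=
  wcomp r lam /\ forall i j : 'I_n, lam i = 0 -> i < j -> lam j = 0.

Definition ro (n : nat) (A : 'M[nat]_n) : 'I_n -> nat :=
  fun i => \sum_(j < n) A i j.
Definition co (n : nat) (A : 'M[nat]_n) : 'I_n -> nat :=
  fun j => \sum_(i < n) A i j.

Definition col_block_diag (n : nat) (A : 'M[nat]_n) : Prop :=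
  forall i j : 'I_n, 0 < A i j ->
    forall i' s : 'I_n, i' <= i -> j < s -> A i' s = 0.

Definition cb (n : nat) (lam : 'I_n -> nat) (A : 'M[nat]_n) : Prop :=
  col_block_diag A /\ forall j, co A j = lam j.

Definition npos (n : nat) (lam : 'I_n -> nat) : nat :=
  #|[pred i : 'I_n | 0 < lam i]|.

(* mu refines lam (lam of the form (lam_1..lam_t,0..0) with lam_k > 0):
   there are cut points 0 = c_0 < c_1 < ... < c_t = n (0-based version of
   1 = i_1 < ... < i_{t+1} = n+1) with lam_k = mu_{c_k} + ... + mu_{c_{k+1}-1}.
   Degenerate case t = 0 (lam = 0): taken to hold (refinement is reflexive). *)
Definition refines (n : nat) (mu lam : 'I_n -> nat) : Prop :=
  let t := npos lam in
  t = 0 \/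
  exists c : nat -> nat,
    [/\ c 0 = 0, c t = n,
        (forall k, k < t -> c k < c k.+1) &
        forall k : 'I_n, k < t ->
          lam k = \sum_(j < n | (c k <= j) && (j < c k.+1)) mu j].

Definition refinements (n r : nat) (lam : 'I_n -> nat) (mu : 'I_n -> nat) : Prop :=
  wcomp r mu /\ refines mu lam.

(* Main.v *)
Require Import Defs.
From mathcomp Require Import all_boot all_algebra zify.
Set Implicit Arguments. Unset Strict Implicit. Unset Printing Implicit Defensive.

Definition pre n (f : 'I_n -> nat) (m : nat) := \sum_(i < n | i < m) f i.

Lemma pre_split n (f : 'I_n -> nat) a b : a <= b ->
  pre f b = pre f a + \sum_(j < n | (a <= j) && (j < b)) f j.
Proof.
move=> ab; rewrite /pre (bigID (fun j : 'I_n => a <= j)) /= addnC; congr (_ + _).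
  apply: eq_bigl => j; case: (ltnP j a) => h /=; last by rewrite andbF.
  by rewrite andbT (leq_trans h ab).
by apply: eq_bigl => j; rewrite andbC.
Qed.

Lemma pre_mono n (f : 'I_n -> nat) a b : a <= b -> pre f a <= pre f b.
Proof. by move=> ab; rewrite (pre_split f ab) leq_addr. Qed.

Lemma pre_succ n (f : 'I_n -> nat) (i : 'I_n) : pre f i.+1 = pre f i + f i.
Proof.
rewrite /pre (bigD1 i) //= addnC; congr (_ + _).
apply: eq_bigl => j; rewrite -val_eqE /=; lia.
Qed.

Lemma pre0 n (f : 'I_n -> nat) : pre f 0 = 0.
Proof. by rewrite /pre big_pred0. Qed.

Lemma pre_full n (f : 'I_n -> nat) m : n <= m -> pre f m = \sum_(i < n) f i.
Proof. move=> h; apply: eq_bigl => i; exact: leq_trans (ltn_ord i) h. Qed.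

Lemma pre_const1 n m : m <= n -> pre (fun _ : 'I_n => 1) m = m.
Proof.
elim: m => [|m IH] h; first by rewrite pre0.
by rewrite (pre_succ _ (Ordinal h)) /= IH ?addn1 // ltnW.
Qed.

Lemma card_lt n m : m <= n -> #|[pred i : 'I_n | i < m]| = m.
Proof. by move=> h; rewrite -sum1_card -{2}(pre_const1 h). Qed.

Lemma pos_iff n r (lam : 'I_n -> nat) : wcomp_bullet r lam ->
  forall k : 'I_n, (0 < lam k) = (k < npos lam).
Proof.
case=> _ hb k.
have down (i j : 'I_n) : i < j -> 0 < lam j -> 0 < lam i.
  by move=> ij; rewrite !lt0n; apply: contra_neq => h0; exact: hb _ _ h0 ij.
have zup (i : 'I_n) : k <= i -> lam k = 0 -> lam i = 0.
  move=> ki lk0; case: (ltngtP k i) ki => // [ki|/val_inj <- //] _; exact: hb lk0 ki.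
case: (posnP (lam k)) => [lk0|lkp].
  apply/esym/negbTE; rewrite -leqNgt /npos.
  rewrite -{1}(card_lt (ltnW (ltn_ord k))); apply: subset_leq_card.
  apply/subsetP => i; rewrite !inE => li; case: (ltnP i k) => // ki.
  by rewrite (zup _ ki lk0) in li.
apply/esym; rewrite /npos -(card_lt (ltn_ord k)); apply: subset_leq_card.
apply/subsetP => i; rewrite !inE ltnS => ik.
case: (ltngtP i k) ik => // [ik|/val_inj -> //] _; exact: down ik lkp.
Qed.

Definition cnd n (lam : 'I_n -> nat) (k : 'I_n) x :=
  (pre lam k <= x) && (x < pre lam k + lam k).

Definition Fm n (lam mu : 'I_n -> nat) : 'M[nat]_n :=
  \matrix_(i, k) (if cnd lam k (pre mu i) then mu i else 0).

Lemma cnd_uniq n (lam : 'I_n -> nat) (j k : 'I_n) x :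
  j != k -> cnd lam j x -> ~~ cnd lam k x.
Proof.
rewrite /cnd -val_eqE /= => jk /andP[h1 h2]; apply/negP => /andP[h3 h4].
case: (ltngtP j k) jk => // [jk|kj] _.
  have := pre_mono lam jk; rewrite (pre_succ lam j); lia.
have := pre_mono lam kj; rewrite (pre_succ lam k); lia.
Qed.

Lemma Lrow n (A : 'M[nat]_n) i k : col_block_diag A -> 0 < A i k -> ro A i = A i k.
Proof.
move=> cbA hk; rewrite /ro (bigD1 k) //= big1 ?addn0 // => j jk.
case: (ltngtP j k) => [jk'|kj|e].
- apply/eqP; rewrite -leqn0 leqNgt; apply/negP => hj.
  have := cbA i j hj i k (leqnn _) jk'; lia.
- exact: (cbA _ _ hk _ _ (leqnn _) kj).
- by rewrite (val_inj e) eqxx in jk.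
Qed.

Lemma Lp n (A : 'M[nat]_n) i k : col_block_diag A -> 0 < A i k ->
  pre (ro A) i = pre (co A) k + pre (fun i' => A i' k) i.
Proof.
move=> cbA hk.
have E : forall i' : 'I_n, i' < i -> ro A i' = \sum_(j < n | j < k) A i' j + A i' k.
  move=> i' hi'; rewrite /ro (bigID (fun j : 'I_n => j < k)) /=; congr (_ + _).
  rewrite (bigD1 k) ?ltnn //= big1 ?addn0 // => j /andP[jk jnk].
  have kj : k < j by move: jk jnk; rewrite -val_eqE /=; lia.
  exact: cbA i k hk i' j (ltnW hi') kj.
rewrite /pre (eq_bigr _ E) big_split /=; congr (_ + _).
rewrite exchange_big /=; apply: eq_bigr => j jk.
rewrite /co [RHS](bigID (fun i' : 'I_n => i' < i)) /= [X in _ = _ + X]big1 ?addn0 // => i' hi'.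
rewrite -leqNgt in hi'; apply/eqP; rewrite -leqn0 leqNgt; apply/negP => pos.
have := cbA i' j pos i k hi' jk; lia.
Qed.

Lemma cb_F n (lam : 'I_n -> nat) A : cb lam A -> A = Fm lam (ro A).
Proof.
move=> [cbA coA]; apply/matrixP => i k; rewrite mxE.
have preco : pre (co A) =1 pre lam by move=> m; apply: eq_bigr => j _; exact: coA.
have key : forall j, 0 < A i j -> cnd lam j (pre (ro A) i) /\ ro A i = A i j.
  move=> j hj; rewrite (Lp cbA hj) preco (Lrow cbA hj); split => //.
  have : pre (fun i' => A i' j) i + A i j <= lam j.
    have := pre_succ (fun i' => A i' j) i => /= <-.
    rewrite -coA /co -(pre_full (fun i' => A i' j) (leqnn n)); exact: pre_mono.
  rewrite /cnd; lia.
case: (posnP (A i k)) => [e|hk].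
  rewrite e; case: ifP => // cn.
  case: (posnP (ro A i)) => // rp; exfalso.
  have : [exists j, 0 < A i j].
    apply: contraLR rp => /existsPn h; rewrite -leqNgt leqn0 /ro; apply/eqP.
    by apply: big1 => j _; move: (h j); case: (A i j).
  case/existsP => j hj; have [cj _] := key j hj.
  have jk : j != k by apply: contraTneq hj => ->; rewrite e.
  by have := cnd_uniq jk cj; rewrite cn.
by have [ck ->] := key k hk; rewrite ck.
Qed.

Lemma ro_F n (lam mu : 'I_n -> nat) : pre lam n = pre mu n -> ro (Fm lam mu) =1 mu.
Proof.
move=> tot i; rewrite /ro; case: (posnP (mu i)) => [e|mp].
  by rewrite e big1 // => k _; rewrite mxE e; case: ifP.
pose k0 : 'I_n := Ordinal (leq_ltn_trans (leq0n i) (ltn_ord i)).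
have h0 : pre lam k0 <= pre mu i by rewrite pre0.
case: (arg_maxnP (P := fun k : 'I_n => pre lam k <= pre mu i) val h0) => k hk kmax.
have ck : cnd lam k (pre mu i).
  rewrite /cnd hk /= -pre_succ.
  case: (ltnP k.+1 n) => kn.
    rewrite ltnNge; apply/negP => le.
    have := kmax (Ordinal kn) le; rewrite /=; lia.
  rewrite (pre_full lam kn) -(pre_full lam (leqnn n)) tot.
  have := pre_succ mu i; have := pre_mono mu (ltn_ord i); lia.
rewrite (bigD1 k) //= mxE ck big1 ?addn0 // => j jk; rewrite mxE.
by rewrite (negbTE (cnd_uniq _ ck)) // eq_sym.
Qed.

Lemma cbd_F n (lam mu : 'I_n -> nat) : col_block_diag (Fm lam mu).
Proof.
move=> i k; rewrite mxE; case: ifP => // ck mp i' s hi' ks; rewrite mxE.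
case: ifP => // cs; exfalso; move: ck cs; rewrite /cnd.
have := pre_mono mu hi'; have := pre_mono lam ks; rewrite pre_succ; lia.
Qed.

Lemma npos_le n (lam : 'I_n -> nat) : npos lam <= n.
Proof. by rewrite /npos; apply: leq_trans (max_card _) _; rewrite card_ord. Qed.

Lemma co_F n r (lam mu : 'I_n -> nat) : wcomp_bullet r lam -> refinements r lam mu ->
  forall k, co (Fm lam mu) k = lam k.
Proof.
move=> hb [hmu href] k; case: (posnP (lam k)) => [e|lp].
  rewrite e /co big1 // => i _; rewrite mxE /cnd e addn0; case: ifP => // /andP[a b]; lia.
have kt := lp; rewrite (pos_iff hb) in kt.
have tn := npos_le lam.
case: href => [ht|[c [c0 ct cinc cblk]]]; first by rewrite ht in kt.
have hits : forall m, m <= npos lam -> pre mu (c m) = pre lam m.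
  elim => [|m IH] hm; first by rewrite c0 !pre0.
  have mn : m < n by lia.
  rewrite (pre_split mu (ltnW (cinc m hm))) IH ?(ltnW hm) //.
  rewrite (pre_succ lam (Ordinal mn)) /= (cblk (Ordinal mn) hm) //.
rewrite /co (cblk k kt) [RHS]big_mkcond /=; apply: eq_bigr => i _; rewrite mxE.
case: (posnP (mu i)) => [->|mp]; first by case: ifP; case: ifP.
have e1 := hits k (ltnW kt); have e2 := hits k.+1 kt; rewrite (pre_succ lam k) in e2.
have s := pre_succ mu i.
congr (if _ then _ else _); rewrite /cnd.
case: (ltnP i (c k)) => h1.
  have := pre_mono mu h1; rewrite /=; lia.
have := pre_mono mu h1; rewrite /=.
case: (ltnP i (c k.+1)) => h2; have := pre_mono mu h2; lia.
Qed.

Lemma G n r (lam mu : 'I_n -> nat) : wcomp_bullet r lam -> wcomp r mu ->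
  (forall k : 'I_n, k < npos lam -> exists i : 'I_n, pre mu i = pre lam k) ->
  refines mu lam.
Proof.
move=> hb hmu hits; rewrite /refines.
case: (posnP (npos lam)) => [t0|tp]; [by left|right].
have tn := npos_le lam.
have lamt : pre lam (npos lam) = pre mu n.
  rewrite (pre_full mu (leqnn n)) hmu -(proj1 hb) /pre.
  rewrite [RHS](bigID (fun i : 'I_n => i < npos lam)) /= [X in _ = _ + X]big1 ?addn0 // => i.
  by rewrite -(pos_iff hb) lt0n negbK => /eqP.
pose c m := if m == 0 then 0 else if m < npos lam then
  (if [pick i : 'I_n | pre mu i == pre lam m] is Some i then val i else 0) else n.
have cprop : forall m, m < npos lam -> c m < n /\ pre mu (c m) = pre lam m.
  move=> m mt; rewrite /c mt; case: eqP => [->|m0].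
    by split; [lia | rewrite !pre0].
  case: pickP => [i /eqP hi | none]; first by split => //; exact: ltn_ord.
  exfalso; have mn : m < n by lia.
  have [i hi] := hits (Ordinal mn) mt.
  by move: (none i); rewrite hi eqxx.
have ct : c (npos lam) = n by rewrite /c ltnn; case: eqP => //; lia.
have hitall : forall m, m <= npos lam -> pre mu (c m) = pre lam m.
  move=> m; rewrite leq_eqVlt => /orP[/eqP ->|mt]; last by have [] := cprop m mt.
  by rewrite ct lamt.
have cinc : forall k, k < npos lam -> c k < c k.+1.
  move=> k kt; case: (ltnP k.+1 (npos lam)) => h.
    have [_ e1] := cprop k kt; have [_ e2] := cprop k.+1 h.
    have mn : k < n by lia.
    have lp : 0 < lam (Ordinal mn) by rewrite (pos_iff hb).
    have := pre_succ lam (Ordinal mn); rewrite /= => e3.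
    rewrite ltnNge; apply/negP => le; have := pre_mono mu le; lia.
  have -> : k.+1 = npos lam by lia.
  by rewrite ct; have [] := cprop k kt.
exists c; split => //.
move=> k kt; have e1 := hitall k (ltnW kt); have e2 := hitall k.+1 kt.
rewrite (pre_split mu (ltnW (cinc k kt))) (pre_succ lam k) e1 in e2; lia.
Qed.

Theorem mainTheorem2 (n r : nat) (lam : 'I_n -> nat) :
  wcomp_bullet r lam ->
  [/\ (forall A : 'M[nat]_n, cb lam A -> refinements r lam (ro A)),
      (forall A B : 'M[nat]_n, cb lam A -> cb lam B -> ro A =1 ro B -> A = B) &
      (forall mu : 'I_n -> nat, refinements r lam mu ->
         exists2 A : 'M[nat]_n, cb lam A & ro A =1 mu)].
Proof.
move=> hb; split.
- move=> A [cbA coA].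
  have preco : pre (co A) =1 pre lam by move=> m; apply: eq_bigr => j _; exact: coA.
  have hw : wcomp r (ro A).
    rewrite /wcomp /ro exchange_big /= -(proj1 hb); apply: eq_bigr => j _; exact: coA.
  split => //; apply: (G hb hw) => k kt.
  have lp : 0 < lam k by rewrite (pos_iff hb).
  have : [exists i, 0 < A i k].
    apply: contraLR lp => /existsPn h; rewrite -leqNgt leqn0 -coA /co; apply/eqP.
    by apply: big1 => j _; move: (h j); case: (A j k).
  case/existsP => i0 hi0.
  case: (arg_minnP (P := fun i : 'I_n => 0 < A i k) val hi0) => i hi imin.
  exists i; rewrite (Lp cbA hi) preco.
  suff -> : pre (fun i' => A i' k) i = 0 by rewrite addn0.
  apply: big1 => j ji; apply/eqP; rewrite -leqn0 leqNgt; apply/negP => pj.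
  by have := imin j pj; move=> /(leq_trans ji); rewrite ltnn.
- move=> A B hA hB e; rewrite (cb_F hA) (cb_F hB); apply/matrixP => i k; rewrite !mxE.
  have pe : pre (ro A) i = pre (ro B) i by apply: eq_bigr => j _; exact: e.
  by rewrite pe e.
- move=> mu hmu; exists (Fm lam mu).
    by split; [exact: cbd_F | exact: co_F hb hmu].
  apply: ro_F; rewrite !pre_full // (proj1 hb); exact: (esym (proj1 hmu)).
Qed.
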